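(* Let $n,d\in\mathbf{N}$ and let $\overline{F},\overline{G}:\mathbf{N}^d\to\mathbf{Z}_+$ be order-reversing functions such that $\overline{F}_{\mathbf{a}}=\overline{G}_{\mathbf{a}}=0$ for every upper boundary point $\mathbf{a}$ of $[n]^d$. Let $F:=\overline{F}|_{[n]^d}$ and $G:=\overline{G}|_{[n]^d}$. Then \[d_{\mathrm{I}}(\overline{F},\overline{G})=\min\{k\in\{0,1,\dots,n-1\}:\text{the $k$-test for $(F,G)$ returns ''Yes''}\}.\]
   Context: $\mathbf{N}=\{1,2,\dots\}$ with the product order on $\mathbf{N}^d$; $[n]=\{1,\dots,n\}$ and $[n]^d\subseteq\mathbf{N}^d$. A point $\mathbf{a}=(a_1,\dots,a_d)\in[n]^d$ is an upper boundary point of $[n]^d$ if $a_i=n$ for some $i$. Order-reversing means $\mathbf{a}\le\mathbf{b}\Rightarrow \overline{F}_{\mathbf{a}}\ge\overline{F}_{\mathbf{b}}$. The interleaving distance between order-reversing $\overline{F},\overline{G}:\mathbf{N}^d\to\mathbf{Z}_+$ (regarded as functors into the poset $\mathbf{Z}_+^{\mathrm{op}}$) is $d_{\mathrm{I}}(\overline{F},\overline{G}):=\inf\{k\in\mathbf{Z}_+:\forall\mathbf{a}\in\mathbf{N}^d,\ \overline{F}_{\mathbf{a}}\ge\overline{G}_{\mathbf{a}+k(1,\dots,1)}\text{ and }\overline{G}_{\mathbf{a}}\ge\overline{F}_{\mathbf{a}+k(1,\dots,1)}\}$. For $F:[n]^d\to\mathbf{Z}_+$ and $k\in\{0,\dots,n-1\}$,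 the lower-left block $F|_{[n-k]^d}$ is the restriction to $[n-k]^d$ and the upper-right block $F|^{[n-k]^d}:[n-k]^d\to\mathbf{Z}_+$ is $\mathbf{a}\mapsto F_{\mathbf{a}+k(1,\dots,1)}$. For functions $H,K$ on the same domain, $H\ge K$ means pointwise. The $k$-test for $(F,G)$ returns ''Yes'' iff $F|_{[n-k]^d}\ge G|^{[n-k]^d}$ and $G|_{[n-k]^d}\ge F|^{[n-k]^d}$, and ''No'' otherwise. *)

(* Defs.v *)
From mathcomp Require Import all_boot.
Set Implicit Arguments. Unset Strict Implicit. Unset Printing Implicit Defensive.

(* Points of N^d (N = {1,2,...}) are represented as functions 'I_d -> nat
   whose coordinates are all >= 1. *)
Definition point (d : nat) := 'I_d -> nat.

Definition inNd d (a : point d) : Prop := forall i, 1 <= a i.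

Definition in_box d (m : nat) (a : point d) : Prop := forall i, 1 <= a i <= m.

Definition ple d (a b : point d) : Prop := forall i, a i <= b i.

Definition shift d (a : point d) (k : nat) : point d := fun i => a i + k.

Definition upper_boundary d (n : nat) (a : point d) : Prop :=
  in_box n a /\ exists i, a i = n.

Definition order_reversing d (F : point d -> nat) : Prop :=
  forall a b, inNd a -> inNd b -> ple a b -> F b <= F a.

Definition interleaved d (F G : point d -> nat) (k : nat) : Prop :=
  forall a, inNd a -> G (shift a k) <= F a /\ F (shift a k) <= G a.

Definition restrict d (n : nat) (F : point d -> nat) : {a : point d | in_box n a} -> nat :=
  fun a => F (proj1_sig a).

Definition ktest d (n : nat) (F G : {a : point d | in_box n a} -> nat) (k : nat) : Prop :=
  forall (a : point d) (Ha : in_box (n - k) a) (Ha1 : in_box n a) (Hak : in_box n (shift a k)),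
    G (exist _ (shift a k) Hak) <= F (exist _ a Ha1) /\
    F (exist _ (shift a k) Hak) <= G (exist _ a Ha1).

Definition is_min_nat (P : nat -> Prop) (m : nat) : Prop :=
  P m /\ forall k, P k -> m <= k.
Arguments ktest {d} n F G k.
Arguments restrict {d} n F.

(* Main.v *)
Require Import Defs.
From mathcomp Require Import all_boot.
From mathcomp Require Import zify.
From Stdlib Require Import Classical.

Lemma min_exists (P : nat -> Prop) N : P N -> exists m, P m /\ forall k, P k -> m <= k.
Proof.
elim/ltn_ind: N => N IH PN.
case: (classic (exists k, k < N /\ P k)) => [[k [Hk Pk]]|H].
  exact: (IH k Hk Pk).
exists N; split => // k Pk; rewrite leqNgt; apply/negP => Hk; apply: H; by exists k.
Qed.

Lemma Fzero n d (F : point d -> nat) : 1 <= n -> order_reversing F ->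
  (forall a, upper_boundary n a -> F a = 0) ->
  forall b, inNd b -> (exists i, n <= b i) -> F b = 0.
Proof.
move=> Hn HF Hb b Hbn [i Hi].
pose c : point d := fun j => minn (b j) n.
have Hc : upper_boundary n c.
  split; first by move=> j; rewrite /c; have := Hbn j; lia.
  by exists i; rewrite /c; lia.
have : F b <= F c.
  apply: HF => // j; rewrite /c; have := Hbn j; lia.
by rewrite (Hb c Hc); lia.
Qed.

Theorem proposition5p3 (n d : nat) (Fbar Gbar : point d -> nat) :
  1 <= n -> 1 <= d ->
  order_reversing Fbar -> order_reversing Gbar ->
  (forall a, upper_boundary n a -> Fbar a = 0 /\ Gbar a = 0) ->
  exists m,
    is_min_nat (interleaved Fbar Gbar) m /\
    is_min_nat (fun k => k <= n - 1 /\ ktest n (restrict n Fbar) (restrict n Gbar) k) m.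
Proof.
move=> Hn Hd HF HG Hb.
have FZ := @Fzero n d Fbar Hn HF (fun a H => (Hb a H).1).
have GZ := @Fzero n d Gbar Hn HG (fun a H => (Hb a H).2).
have Hequiv : forall k, k <= n - 1 ->
   (interleaved Fbar Gbar k <-> ktest n (restrict n Fbar) (restrict n Gbar) k).
  move=> k Hk; split.
    move=> HI a Ha Ha1 Hak; rewrite /restrict /=.
    apply: HI => i; have := Ha i; lia.
  move=> HT a Ha.
  have [H|H] := boolP [forall i, a i <= n - k].
    have Ha' : in_box (n - k) a by move=> i; have := Ha i; have := forallP H i; lia.
    have Ha1 : in_box n a by move=> i; have := Ha' i; lia.
    have Hak : in_box n (shift a k) by move=> i; have := Ha' i; rewrite /shift; lia.
    exact: (HT a Ha' Ha1 Hak).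
  move/forallPn: H => [i Hi].
  have Hs : inNd (shift a k) by move=> j; have := Ha j; rewrite /shift; lia.
  have Hex : exists i, n <= shift a k i by exists i; rewrite /shift; move: Hi; lia.
  by rewrite (FZ _ Hs Hex) (GZ _ Hs Hex).
have Hn1 : interleaved Fbar Gbar (n - 1).
  move=> a Ha.
  have Hs : inNd (shift a (n - 1)) by move=> j; have := Ha j; rewrite /shift; lia.
  have Hex : exists i, n <= shift a (n - 1) i.
    by exists (Ordinal Hd); rewrite /shift; have := Ha (Ordinal Hd); lia.
  by rewrite (FZ _ Hs Hex) (GZ _ Hs Hex).
have [m [Pm Mm]] := @min_exists _ _ Hn1.
have Hmn : m <= n - 1 by exact: Mm.
exists m; split; first by split.
split; first by split => //; apply/Hequiv.
move=> k [Hk Tk]; apply: Mm; exact/(Hequiv k Hk).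
Qed.
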